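(* Let $\mathcal{A}*\mathcal{X}=\mathcal{B}$ be a consistent tensor system with unique solution $\mathcal{X}^*$, $\mathcal{A}\in\mathbb{R}^{n_1\times n_2\times n}$, $\mathcal{B}\in\mathbb{R}^{n_1\times n_3\times n}$, let $\alpha>0$, and let $\mathcal{X}(t)$ be the iterates of cyclic frontal slice descent with learning rate $\alpha$. With $\mathcal{E}(t)=\|\mathcal{X}(t)-\mathcal{X}^*\|_F$ (so $\mathcal{E}(t)=\|\mathcal{X}^*\|_F$ for $t\le 0$), $$\kappa=\max_{i=1,\dots,n}\|\mathcal{I}-\alpha\tilde{\mathcal{A}}_i^T*\tilde{\mathcal{A}}_i\|_{op},\qquad \mu=\max_{i\neq j}\|\tilde{\mathcal{A}}_i^T*\tilde{\mathcal{A}}_j\|_{op},$$ we have for every $t\ge 0$: $$\mathcal{E}(t+1)\le\kappa\,\mathcal{E}(t)+\alpha\mu\sum_{i=1}^{n-1}\mathcal{E}(t-i).$$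
   Context: For $\mathcal{A}\in\mathbb{R}^{n_1\times n_2\times n}$ with frontal slices $A_k=\mathcal{A}(:,:,k)$: $\mathrm{unfold}(\mathcal{A})$ stacks $A_1,\dots,A_n$ vertically, $\mathrm{fold}$ is its inverse, $\mathrm{bcirc}(\mathcal{A})$ is the $n_1n\times n_2n$ block-circulant matrix with $(p,q)$ block $A_{((p-q)\bmod n)+1}$, and $\mathcal{A}*\mathcal{X}=\mathrm{fold}(\mathrm{bcirc}(\mathcal{A})\mathrm{unfold}(\mathcal{X}))$. $\mathcal{I}$ is the identity tensor (first frontal slice the identity matrix, others zero). $\mathcal{A}^T$ transposes each frontal slice and reverses the order of slices $2,\dots,n$. $\|\cdot\|_F$ is the Frobenius norm and $\|\mathcal{C}\|_{op}=\sup_{\|\mathcal{X}\|_F=1}\|\mathcal{C}*\mathcal{X}\|_F=\|\mathrm{bcirc}(\mathcal{C})\|_2$. $\tilde{\mathcal{A}}_k$ has $k$-th frontal slice $A_k$ and zeros elsewhere. Cyclic frontal slice descent: set $\mathcal{X}(t)=0$ for $t\le 0$; for $t=0,1,\dots$ let $\mathcal{R}(t+1)=\mathcal{B}-\sum_{j=0}^{n-1}\tilde{\mathcal{A}}_{((t-j)\bmod n)+1}*\mathcal{X}(t-j)$ and $\mathcal{X}(t+1)=\mathcal{X}(t)+\alpha\tilde{\mathcal{A}}_{(t\bmod n)+1}^T*\mathcal{R}(t+1)$. *)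

(* Defs.v *)
From HB Require Import structures.
From mathcomp Require Import all_boot all_order all_algebra.
From mathcomp Require Import boolp classical_sets reals.
Set Implicit Arguments. Unset Strict Implicit. Unset Printing Implicit Defensive.
Import Order.TTheory GRing.Theory Num.Theory.
Local Open Scope ring_scope.
Local Open Scope classical_set_scope.

(* A third-order tensor in R^{m1 x m2 x n}, given by its frontal slices,
   indexed 0..n-1 (slice k here is slice k+1 of the paper). *)
Definition tensor (R : Type) (m1 m2 n : nat) := 'I_n -> 'M[R]_(m1, m2).

Lemma ord_gt0 n (i : 'I_n) : (0 < n)%N.
Proof. exact: leq_ltn_trans (leq0n i) (ltn_ord i). Qed.

Definition ordmod n (i : 'I_n) (m : nat) : 'I_n := Ordinal (ltn_pmod m (ord_gt0 i)).

Section Tensors.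
Variable R : realType.

Definition tzero m1 m2 n : tensor R m1 m2 n := fun _ => 0.
Definition tadd m1 m2 n (X Y : tensor R m1 m2 n) : tensor R m1 m2 n := fun k => X k + Y k.
Definition tsub m1 m2 n (X Y : tensor R m1 m2 n) : tensor R m1 m2 n := fun k => X k - Y k.
Definition tscale m1 m2 n (a : R) (X : tensor R m1 m2 n) : tensor R m1 m2 n := fun k => a *: X k.

(* t-product: A * X = fold(bcirc(A) unfold(X)); block (p,q) of bcirc(A) is
   the slice ((p - q) mod n) (0-indexed), so slice p of A*X is
   sum_q A_{(p-q) mod n} X_q. *)
Definition tprod m1 m2 m3 n (A : tensor R m1 m2 n) (X : tensor R m2 m3 n)
  : tensor R m1 m3 n :=
  fun p => \sum_(q < n) A (ordmod p (p + n - q)) *m X q.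

(* transpose: transpose each slice and reverse the order of slices 2..n *)
Definition ttr m1 m2 n (A : tensor R m1 m2 n) : tensor R m2 m1 n :=
  fun k => (A (ordmod k (n - k)))^T.

Definition tid m n : tensor R m m n := fun k => if val k == 0%N then 1%:M else 0.

Definition tilde m1 m2 n (A : tensor R m1 m2 n) (k : nat) : tensor R m1 m2 n :=
  fun j => if val j == (k %% n)%N then A j else 0.

Definition fnorm m1 m2 n (X : tensor R m1 m2 n) : R :=
  Num.sqrt (\sum_(k < n) \sum_(i < m1) \sum_(j < m2) (X k i j) ^+ 2).

Definition opnorm m2 m3 n (C : tensor R m2 m2 n) : R :=
  sup [set fnorm (tprod C X) | X in [set X : tensor R m2 m3 n | fnorm X = 1]].

(* Cyclic frontal slice descent.
   cfsd_hist t s = X(s) for s <= t (0-indexed nat times), X(0) = 0. *)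
Section CFSD.
Variables (n1 n2 n3 n : nat) (A : tensor R n1 n2 n) (B : tensor R n1 n3 n) (alpha : R).

(* X(t'+1) from the history h (h s = X(s) for s <= t') *)
Definition cfsd_step (h : nat -> tensor R n2 n3 n) (t' : nat) : tensor R n2 n3 n :=
  let Rt := tsub B (\big[@tadd n1 n3 n/@tzero n1 n3 n]_(j < n)
               tprod (tilde A (t' + n - j)%N) (if (j <= t')%N then h (t' - j)%N
                                              else @tzero n2 n3 n)) in
  tadd (h t') (tscale alpha (tprod (ttr (tilde A t')) Rt)).

Fixpoint cfsd_hist (t : nat) : nat -> tensor R n2 n3 n :=
  match t with
  | 0%N => fun _ => @tzero n2 n3 n
  | t'.+1 => let h := cfsd_hist t' in
             fun s => if (s <= t')%N then h s else cfsd_step h t'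
  end.

Definition cfsd (t : nat) : tensor R n2 n3 n := cfsd_hist t t.

Definition cfsd_int (t : int) : tensor R n2 n3 n :=
  match t with Posz k => cfsd k | Negz _ => @tzero n2 n3 n end.
End CFSD.
End Tensors.

(* Main.v *)
Require Import Defs.
From HB Require Import structures.
From mathcomp Require Import all_boot all_order all_algebra.
From mathcomp Require Import boolp classical_sets reals.
From mathcomp Require Import ring lra.
Import Order.TTheory GRing.Theory Num.Theory.
Local Open Scope ring_scope.

Section Nrm.
Variables (R : realType) (I : finType).
Implicit Types f g : I -> R.

Definition nrm f := Num.sqrt (\sum_x f x ^+ 2).

Lemma nrm_ge0 f : 0 <= nrm f.
Proof. exact: sqrtr_ge0. Qed.

Lemma sumsq_ge0 f : 0 <= \sum_x f x ^+ 2.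
Proof. by apply: sumr_ge0 => x _; exact: sqr_ge0. Qed.

Lemma CS f g : (\sum_x f x * g x) ^+ 2 <= (\sum_x f x ^+ 2) * (\sum_x g x ^+ 2).
Proof.
have H : 0 <= \sum_i \sum_j (f i * g j - f j * g i) ^+ 2.
  by apply: sumr_ge0 => i _; apply: sumr_ge0 => j _; exact: sqr_ge0.
have E : \sum_i \sum_j (f i * g j - f j * g i) ^+ 2 =
   \sum_i \sum_j (f i ^+ 2 * g j ^+ 2 + f j ^+ 2 * g i ^+ 2
   - 2 * ((f i * g i) * (f j * g j))).
  by apply: eq_bigr => i _; apply: eq_bigr => j _; ring.
have E' : forall i, \sum_j (f i ^+ 2 * g j ^+ 2 + f j ^+ 2 * g i ^+ 2
   - 2 * ((f i * g i) * (f j * g j))) = 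
   \sum_j f i ^+ 2 * g j ^+ 2 + \sum_j f j ^+ 2 * g i ^+ 2
   - 2 * \sum_j ((f i * g i) * (f j * g j)).
  by move=> i; rewrite sumrB big_split mulr_sumr.
move: H; rewrite E; under eq_bigr => i _ do rewrite E'.
rewrite sumrB big_split /= -mulr_sumr.
have E1 : \sum_i \sum_j f i ^+ 2 * g j ^+ 2 = (\sum_x f x ^+ 2) * (\sum_x g x ^+ 2).
  by rewrite mulr_suml; apply: eq_bigr => i _; rewrite mulr_sumr.
have E2 : \sum_i \sum_j f j ^+ 2 * g i ^+ 2 = (\sum_x f x ^+ 2) * (\sum_x g x ^+ 2).
  by rewrite exchange_big /=.
have E3 : \sum_i \sum_j (f i * g i) * (f j * g j) = (\sum_x f x * g x) ^+ 2.
  by rewrite expr2 mulr_suml; apply: eq_bigr => i _; rewrite mulr_sumr.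
rewrite E1 E2 E3.
set a := _ * _; set b := _ ^+ 2 => H.
lra.
Qed.

Lemma dot_le f g : \sum_x f x * g x <= nrm f * nrm g.
Proof.
apply: le_trans (ler_norm _) _.
rewrite -sqrtr_sqr /nrm -sqrtrM ?sumsq_ge0 // ler_sqrt; first exact: CS.
by apply: mulr_ge0; apply: sumsq_ge0.
Qed.

Lemma nrmD f g : nrm (fun x => f x + g x) <= nrm f + nrm g.
Proof.
have h0 : 0 <= nrm f + nrm g by apply: addr_ge0; apply: nrm_ge0.
rewrite -(ger0_norm h0) -sqrtr_sqr {1}/nrm ler_sqrt ?sqr_ge0 //.
have -> : \sum_x (f x + g x) ^+ 2 = \sum_x f x ^+ 2 + \sum_x g x ^+ 2 + 2 * \sum_x f x * g x.
  rewrite mulr_sumr -!big_split /=; apply: eq_bigr => x _; ring.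
rewrite sqrrD /nrm !sqr_sqrtr ?sumsq_ge0 //.
have := dot_le f g; rewrite /nrm; lra.
Qed.

Lemma nrmZ (a : R) f : nrm (fun x => a * f x) = `|a| * nrm f.
Proof.
rewrite /nrm -sqrtr_sqr -sqrtrM ?sqr_ge0 // mulr_sumr; congr Num.sqrt.
by apply: eq_bigr => x _; rewrite exprMn.
Qed.

Lemma nrmN f : nrm (fun x => - f x) = nrm f.
Proof. by rewrite /nrm; congr Num.sqrt; apply: eq_bigr => x _; rewrite sqrrN. Qed.

Lemma nrm_entry f x : `|f x| <= nrm f.
Proof.
rewrite -sqrtr_sqr /nrm ler_sqrt ?sumsq_ge0 //.
rewrite (bigD1 x) //= lerDl; apply: sumr_ge0 => y _; exact: sqr_ge0.
Qed.

Lemma nrm_ext f g : (forall x, f x = g x) -> nrm f = nrm g.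
Proof. by move=> h; rewrite /nrm; congr Num.sqrt; apply: eq_bigr => x _; rewrite h. Qed.

Lemma nrm_sum (J : Type) (r : seq J) (P : pred J) (F : J -> I -> R) :
  nrm (fun x => \sum_(j <- r | P j) F j x) <= \sum_(j <- r | P j) nrm (F j).
Proof.
elim: r => [|j r IH].
  rewrite big_nil (nrm_ext _ (fun=> 0)); last by move=> x; rewrite big_nil.
  by rewrite /nrm big1 ?sqrtr0 // => x _; rewrite expr0n.
rewrite big_cons; case Pj: (P j).
  rewrite (nrm_ext _ (fun x => F j x + \sum_(j <- r | P j) F j x)); last by move=> x; rewrite big_cons Pj.
  by apply: le_trans (nrmD _ _) _; rewrite lerD2l.
by rewrite (nrm_ext _ (fun x => \sum_(j <- r | P j) F j x)) // => x; rewrite big_cons Pj.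
Qed.

Lemma nrm_bound f (c : R) : 0 <= c -> (forall x, `|f x| <= c) -> nrm f <= Num.sqrt (#|I|%:R * c ^+ 2).
Proof.
move=> c0 h; rewrite /nrm ler_sqrt; last by apply: mulr_ge0; [exact: ler0n| exact: sqr_ge0].
rewrite -sum1_card natr_sum mulr_suml; apply: ler_sum => x _.
rewrite mul1r; move: (h x) => /ler_normlP [h1 h2]; nra.
Qed.
End Nrm.
Arguments nrm {R I}.
Arguments nrm_ext {R I}.
Arguments nrm_entry {R I}.
Arguments nrm_bound {R I}.
Arguments nrmZ {R I}.
Arguments nrmD {R I}.
Arguments nrmN {R I}.
Arguments nrm_sum {R I J}.
Arguments nrm_ge0 {R I}.

Section Idx.
Variable n : nat.
Local Notation N := n.+1.

Lemma ordmodE (i : 'I_N) m : ordmod i m = inZp m.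
Proof. exact: val_inj. Qed.

Lemma inZpD a b : inZp (a + b) = inZp a + inZp b :> 'I_N.
Proof. by apply: val_inj; rewrite /= modnDm. Qed.

Lemma inZpB a b : (b <= a)%N -> inZp (a - b) = inZp a - inZp b :> 'I_N.
Proof. by move=> h; rewrite -{2}(subnK h) inZpD addrK. Qed.

Lemma inZpN : inZp N = 0 :> 'I_N.
Proof. by apply: val_inj; rewrite /= modnn. Qed.

Lemma inZp_tNj t (j : 'I_N) : inZp (t + N - j) = inZp t - j :> 'I_N.
Proof.
rewrite inZpB; last by rewrite (leq_trans (ltnW (ltn_ord j))) // leq_addl.
by rewrite inZpD inZpN addr0 valZpK.
Qed.
End Idx.

Section Tens.
Variables (R : realType) (n : nat).
Local Notation N := n.+1.
Local Notation tensor m1 m2 := (tensor R m1 m2 N).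

Lemma tprodE m1 m2 m3 (A : tensor m1 m2) (X : tensor m2 m3) p :
  tprod A X p = \sum_(q < N) A (p - q) *m X q.
Proof. by rewrite /tprod; apply: eq_bigr => q _; rewrite ordmodE inZp_tNj valZpK. Qed.

Lemma bigtE m1 m2 (I : Type) (r : seq I) (P : pred I) (F : I -> tensor m1 m2) k :
  (\big[@tadd R m1 m2 N/@tzero R m1 m2 N]_(j <- r | P j) F j) k = \sum_(j <- r | P j) F j k.
Proof.
by apply: (big_morph (fun X : tensor m1 m2 => X k) (id1 := 0) (op1 := +%R)).
Qed.

Lemma tprod_sumr m1 m2 m3 (A : tensor m1 m2) (I : Type) (r : seq I) (P : pred I)
   (F : I -> tensor m2 m3) p :
  tprod A (fun k => \sum_(j <- r | P j) F j k) p = \sum_(j <- r | P j) tprod A (F j) p.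
Proof.
rewrite tprodE; under eq_bigr => q _ do rewrite mulmx_sumr.
by rewrite exchange_big /=; apply: eq_bigr => j _; rewrite tprodE.
Qed.

Lemma tprod_suml m1 m2 m3 (I : Type) (r : seq I) (P : pred I) (F : I -> tensor m1 m2)
   (X : tensor m2 m3) p :
  tprod (fun k => \sum_(j <- r | P j) F j k) X p = \sum_(j <- r | P j) tprod (F j) X p.
Proof.
rewrite tprodE; under eq_bigr => q _ do rewrite mulmx_suml.
by rewrite exchange_big /=; apply: eq_bigr => j _; rewrite tprodE.
Qed.

Lemma tprodBr m1 m2 m3 (A : tensor m1 m2) (X Y : tensor m2 m3) p :
  tprod A (tsub X Y) p = tprod A X p - tprod A Y p.
Proof.
by rewrite !tprodE -sumrB; apply: eq_bigr => q _; rewrite /tsub mulmxBr.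
Qed.

Lemma tprodN m1 m2 m3 (A : tensor m1 m2) (X : tensor m2 m3) p :
  tprod A (fun k => - X k) p = - tprod A X p.
Proof.
by rewrite !tprodE -sumrN; apply: eq_bigr => q _; rewrite mulmxN.
Qed.

Lemma tprodZr m1 m2 m3 (A : tensor m1 m2) a (X : tensor m2 m3) p :
  tprod A (tscale a X) p = a *: tprod A X p.
Proof.
by rewrite !tprodE scaler_sumr; apply: eq_bigr => q _; rewrite /tscale scalemxAr.
Qed.

Lemma tprodBl m1 m2 m3 (A C : tensor m1 m2) (X : tensor m2 m3) p :
  tprod (tsub A C) X p = tprod A X p - tprod C X p.
Proof.
by rewrite !tprodE -sumrB; apply: eq_bigr => q _; rewrite /tsub mulmxBl.
Qed.

Lemma tprodZl m1 m2 m3 (A : tensor m1 m2) a (X : tensor m2 m3) p :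
  tprod (tscale a A) X p = a *: tprod A X p.
Proof.
by rewrite !tprodE scaler_sumr; apply: eq_bigr => q _; rewrite /tscale scalemxAl.
Qed.

Lemma tprod_id m m3 (X : tensor m m3) p : tprod (@tid R m N) X p = X p.
Proof.
rewrite tprodE (bigD1 p) //= subrr /tid /= mul1mx big1 ?addr0 // => q qp.
have -> : (val (p - q) == 0%N) = false.
  apply/negbTE; apply: contra qp => /eqP h.
  have : p - q = 0 by apply: val_inj.
  by move/eqP; rewrite subr_eq0 eq_sym.
by rewrite mul0mx.
Qed.

Lemma tprodA m1 m2 m3 m4 (A : tensor m1 m2) (B : tensor m2 m3) (X : tensor m3 m4) p :
  tprod (tprod A B) X p = tprod A (tprod B X) p.
Proof.
rewrite !tprodE.
under [RHS]eq_bigr => q _ do rewrite tprodE mulmx_sumr.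
rewrite exchange_big /=; apply: eq_bigr => r _.
rewrite tprodE mulmx_suml.
rewrite (reindex_inj (addIr (- r))) /=.
apply: eq_bigr => q _; rewrite mulmxA.
congr (A _ *m _ *m _); rewrite opprB addrA subrK //.
Qed.

Lemma tilde_mod m1 m2 (A : tensor m1 m2) a b : (a %% N = b %% N)%N -> tilde A a = tilde A b.
Proof. by move=> h; apply: funext => j; rewrite /tilde h. Qed.

Lemma tildeE m1 m2 (A : tensor m1 m2) t (j k : 'I_N) :
  tilde A (t + N - j) k = if k == inZp t - j then A k else 0.
Proof.
rewrite /tilde; have -> : ((t + N - j) %% N)%N = val (inZp t - j : 'I_N) by rewrite -inZp_tNj.
by [].
Qed.

Lemma tilde_sum m1 m2 (A : tensor m1 m2) t k :
  \sum_(j < N) tilde A (t + N - j) k = A k.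
Proof.
rewrite (bigD1 (inZp t - k)) // big1.
  by rewrite tildeE opprB addrC subrK eqxx; exact: addr0.
move=> j hj; rewrite tildeE.
case: eqP => // h; case/eqP: hj; by rewrite h opprB addrC subrK.
Qed.
End Tens.

Section TNorm.
Variables (R : realType) (n : nat).
Local Notation N := n.+1.
Local Notation tensor m1 m2 := (tensor R m1 m2 N).

Definition flat m1 m2 (X : tensor m1 m2) : 'I_N * ('I_m1 * 'I_m2) -> R :=
  fun x => X x.1 x.2.1 x.2.2.

Arguments flat {m1 m2}.
Lemma fnorm_flat m1 m2 (X : tensor m1 m2) : fnorm X = nrm (flat X).
Proof.
rewrite /fnorm /nrm; congr Num.sqrt.
under eq_bigr => k _ do rewrite pair_bigA.
by rewrite pair_bigA.
Qed.

Lemma fnorm_ge0 m1 m2 (X : tensor m1 m2) : 0 <= fnorm X.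
Proof. exact: sqrtr_ge0. Qed.

Lemma entry_le m1 m2 (X : tensor m1 m2) k i j : `|X k i j| <= fnorm X.
Proof. by rewrite fnorm_flat; apply: (nrm_entry (flat X) (k, (i, j))). Qed.

Lemma fnorm_ext m1 m2 (X Y : tensor m1 m2) : (forall k, X k = Y k) -> fnorm X = fnorm Y.
Proof. by move=> h; rewrite /fnorm; congr Num.sqrt; apply: eq_bigr => k _; rewrite h. Qed.

Lemma opnorm_bound m m3 (C : tensor m m) (Y : tensor m m3) :
  fnorm (tprod C Y) <= @opnorm R m m3 N C * fnorm Y.
Proof.
have ub : has_ubound [set fnorm (tprod C X) | X in [set X : tensor m m3 | fnorm X = 1]].
  exists (Num.sqrt (#|{: 'I_N * ('I_m * 'I_m3)}|%:R *
     (\sum_(q < N) \sum_(l < m) nrm (flat C)) ^+ 2)).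
  move=> _ [X /= X1 <-]; rewrite fnorm_flat; apply: nrm_bound.
    by do 2 (apply: sumr_ge0 => ? _); apply: nrm_ge0.
  move=> [p [i j]]; rewrite /flat /= tprodE summxE.
  apply: le_trans (ler_norm_sum _ _ _) _; apply: ler_sum => q _.
  rewrite mxE; apply: le_trans (ler_norm_sum _ _ _) _; apply: ler_sum => l _.
  rewrite normrM -[X in _ <= X]mulr1; apply: ler_pM => //.
    exact: (nrm_entry (flat C) (p - q, (i, l))).
  by rewrite -X1; apply: entry_le.
have [s0|spos] := eqVneq (fnorm Y) 0.
  have Y0 : forall k i j, Y k i j = 0.
    by move=> k i j; apply/eqP; rewrite -normr_le0 -s0 entry_le.
  rewrite s0 mulr0 /fnorm big1 ?sqrtr0 // => k _; rewrite big1 // => i _; rewrite big1 // => j _.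
  rewrite tprodE summxE big1 ?expr0n // => q _; rewrite mxE big1 // => l _.
  by rewrite Y0 mulr0.
have sgt : 0 < fnorm Y by rewrite lt_def spos fnorm_ge0.
set s := fnorm Y in spos sgt *.
have Y1 : fnorm (tscale s^-1 Y) = 1.
  rewrite fnorm_flat (nrm_ext _ (fun x => s^-1 * flat Y x)); last first.
    by move=> [k [i j]]; rewrite /flat /tscale /= mxE.
  by rewrite nrmZ -fnorm_flat -/s ger0_norm ?invr_ge0 ?fnorm_ge0 // mulVf.
have := ub_le_sup ub (ex_intro2 _ _ _ Y1 erefl).
rewrite -/(opnorm _ _) .
rewrite (@fnorm_ext _ _ _ (tscale s^-1 (tprod C Y))); last by move=> k; rewrite tprodZr.
rewrite fnorm_flat (nrm_ext _ (fun x => s^-1 * flat (tprod C Y) x)); last first.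
  by move=> [k [i j]]; rewrite /flat /tscale /= mxE.
rewrite nrmZ -fnorm_flat ger0_norm ?invr_ge0 ?fnorm_ge0 //.
by rewrite mulrC ler_pdivrMr.
Qed.
End TNorm.
Arguments flat {R n m1 m2}.
Arguments opnorm_bound {R n m m3}.
Arguments fnorm_ge0 {R n m1 m2}.
Arguments fnorm_flat {R n m1 m2}.


Lemma zmod_lem (V : zmodType) (a b x y : V) : a + - (x + y) - b = a - b - x - y.
Proof. by rewrite opprD !addrA [LHS]addrAC; congr (_ + _); rewrite addrAC. Qed.

Lemma sum_conv (R : realType) n (F : nat -> R) :
  \sum_(1 <= i < n.+1) F i = \sum_(j < n.+1 | j != ord0) F j.
Proof.
have H1 : \sum_(j < n.+1) F j = F 0%N + \sum_(j < n.+1 | j != ord0) F j by rewrite (bigD1 ord0).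
have H2 : \sum_(j < n.+1) F j = F 0%N + \sum_(1 <= i < n.+1) F i by rewrite big_ord_recl big_add1 big_mkord /=.
by apply: (addrI (F 0%N)); rewrite -H1 -H2.
Qed.

Section Hist.
Variables (R : realType) (n1 n2 n3 n : nat) (A : Defs.tensor R n1 n2 n)
  (B : Defs.tensor R n1 n3 n) (alpha : R).
Lemma cfsd_hist_le t s : (s <= t)%N -> cfsd_hist A B alpha t s = cfsd A B alpha s.
Proof.
elim: t s => [|t IH] s hs.
  by move: hs; rewrite leqn0 => /eqP ->.
rewrite /=; case: leqP => h; first exact: IH.
have -> : s = t.+1 by apply/eqP; rewrite eqn_leq hs h.
by rewrite /cfsd /= ltnn.
Qed.

Lemma cfsd_succ t : cfsd A B alpha t.+1 = tadd (cfsd A B alpha t) (tscale alpha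
  (tprod (ttr (tilde A t)) (tsub B (\big[@tadd R n1 n3 n/@tzero R n1 n3 n]_(j < n)
     tprod (tilde A (t + n - j)) (cfsd_int A B alpha (t%:Z - j%:Z)))))).
Proof.
have -> : cfsd A B alpha t.+1 = cfsd_step A B alpha (cfsd_hist A B alpha t) t.
  by rewrite /cfsd; simpl cfsd_hist; rewrite ltnn.
have E : \big[@tadd R n1 n3 n/@tzero R n1 n3 n]_(j < n)
     tprod (tilde A (t + n - j)) (if (j <= t)%N then cfsd_hist A B alpha t (t - j)%N
                                              else @tzero R n2 n3 n) =
  \big[@tadd R n1 n3 n/@tzero R n1 n3 n]_(j < n)
     tprod (tilde A (t + n - j)) (cfsd_int A B alpha (t%:Z - j%:Z)).
  apply: eq_bigr => j _; case: leqP => hj.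
    by rewrite cfsd_hist_le ?leq_subr // subzn.
  have : t%:Z - j%:Z < 0 by rewrite subr_lt0 ltz_nat.
  by case: (t%:Z - j%:Z).
by rewrite /cfsd_step E.
Qed.
End Hist.

Theorem lemma1 (R : realType) (n1 n2 n3 n : nat)
    (A : tensor R n1 n2 n) (B : tensor R n1 n3 n) (Xstar : tensor R n2 n3 n)
    (alpha : R) :
  0 < alpha ->
  tprod A Xstar = B ->
  (forall Y : tensor R n2 n3 n, tprod A Y = B -> Y = Xstar) ->
  let E := fun s : int => fnorm (tsub (cfsd_int A B alpha s) Xstar) in
  let kappa := \big[Num.max/0]_(i < n)
      @opnorm R n2 n3 n (tsub (@tid R n2 n)
                      (tscale alpha (tprod (ttr (tilde A i)) (tilde A i)))) in
  let mu := \big[Num.max/0]_(i < n) \big[Num.max/0]_(j < n | i != j)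
      @opnorm R n2 n3 n (tprod (ttr (tilde A i)) (tilde A j)) in
  forall t : nat,
    E (t.+1)%:Z <= kappa * E t%:Z + alpha * mu * \sum_(1 <= i < n) E (t%:Z - i%:Z).
Proof.
case: n A B Xstar => [|n] A B Xstar.
  move=> apos _ _ E kappa mu t.
  by rewrite /E /kappa /mu /fnorm !big_ord0 sqrtr0 !mulr0 mul0r add0r.
move=> apos hB _ E kappa mu t.
pose N := n.+1.
pose X := cfsd_int A B alpha.
pose Z := fun s => tsub (X s) Xstar.
pose T := fun j : 'I_N => tilde A (t + N - j).
pose i0 : 'I_N := inZp t.
have h0 : tilde A i0 = tilde A t by apply: tilde_mod; rewrite /= modn_mod.
have hT : forall j : 'I_N, tilde A (@inZp n t - j)%R = T j.
  by move=> j; rewrite /T; apply: tilde_mod; rewrite -inZp_tNj /= modn_mod.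
have Xt1 := @cfsd_succ _ _ _ _ _ A B alpha t.
pose G := fun j : 'I_N => tprod (tprod (ttr (tilde A t)) (T j)) (Z (t%:Z - j%:Z)).
have HR : forall k, tsub B (\big[@tadd R n1 n3 N/@tzero R n1 n3 N]_(j < N)
     tprod (T j) (X (t%:Z - j%:Z))) k = - \sum_(j < N) tprod (T j) (Z (t%:Z - j%:Z)) k.
  move=> k; rewrite /tsub bigtE -hB.
  have -> : A = (fun k => \sum_(j < N) T j k) by apply: funext => k'; rewrite tilde_sum.
  rewrite tprod_suml -sumrB -sumrN; apply: eq_bigr => j _.
  by rewrite /Z tprodBr opprB.
have Hslice : forall p, Z (t.+1)%:Z p = Z t p - alpha *: G ord0 p
    - alpha *: \sum_(j < N | j != ord0) G j p.
  move=> p; rewrite {1}/Z /tsub.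
  have -> : X (t.+1)%:Z = cfsd A B alpha t.+1 by [].
  rewrite Xt1 /tadd /tscale (funext HR) tprodN tprod_sumr.
  rewrite (bigD1 ord0) //=.
  under eq_bigr => j _ do rewrite -tprodA.
  rewrite -/(G _).
  have -> : tprod (ttr (tilde A t)) (fun k => tprod (T ord0) (Z (t%:Z - 0%:Z)) k) p = G ord0 p.
    by rewrite /G tprodA.
  by rewrite scalerN scalerDr zmod_lem.
have T0 : T ord0 = tilde A t by apply: tilde_mod; rewrite subn0 modnDr.
pose C := tsub (@tid R n2 N) (tscale alpha (tprod (ttr (tilde A t)) (tilde A t))).
have HC : forall p, Z t p - alpha *: G ord0 p = tprod C (Z t) p.
  by move=> p; rewrite tprodBl tprod_id tprodZl /G T0 subr0.
have -> : E (t.+1)%:Z = fnorm (fun p => tprod C (Z t) p - alpha *: \sum_(j < N | j != ord0) G j p).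
  by apply: fnorm_ext => p; rewrite -HC; exact: Hslice.
rewrite fnorm_flat (nrm_ext _ (fun x => flat (tprod C (Z t)) x + - (alpha * \sum_(j < N | j != ord0) flat (G j) x))); last first.
  by move=> [k [i l]]; rewrite /flat /= !mxE !summxE.
apply: le_trans (nrmD _ _) _; rewrite nrmN nrmZ -fnorm_flat (ger0_norm (ltW apos)).
apply: lerD.
  apply: le_trans (opnorm_bound _ _) _; apply: ler_wpM2r; first exact: fnorm_ge0.
  rewrite /kappa /C -h0.
  exact: le_bigmax.

rewrite -mulrA; apply: ler_wpM2l; first exact: ltW.
apply: le_trans (nrm_sum _ _ _) _.
rewrite (@sum_conv _ n (fun i => E (t%:Z - i%:Z))) mulr_sumr; apply: ler_sum => j hj.
rewrite -fnorm_flat; apply: le_trans (opnorm_bound _ _) _; apply: ler_wpM2r; first exact: fnorm_ge0.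
rewrite -h0 -hT /mu.
apply: le_trans (le_bigmax 0 _ i0).
apply: (le_bigmax_cond 0 (j := (inZp t - j)%R) (P := fun j' => i0 != j')).
rewrite /i0; apply: contra hj => /eqP h.
by rewrite -(subKr (inZp t) j) -h subrr.
Qed.
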